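(* Let $p$ be a prime, $w\ge1$, $n\ge2$, and $\mu\ge1$ an integer with $2^\mu<p$. Let $C=\{\mathbf x\in\mathbb{F}_{p^w}^n:\sum_{i=1}^nx_i=0\}$ be the code of additive secret sharings of $0$. For any family $\boldsymbol\tau=(\tau^{(1)},\dots,\tau^{(n)})$ with $\tau^{(j)}:\mathbb{F}_{p^w}\to\{0,1\}^\mu$, \[ SD(\boldsymbol\tau(C),\boldsymbol\tau(\mathcal U_n))\le\frac12\cdot2^\mu\cdot c_\mu^{n-2},\qquad c_\mu=\frac{2^\mu\sin(\pi/2^\mu)}{p\sin(\pi/p)}. \]
   Context: For $S\subseteq\mathbb{F}_{p^w}^n$, $\boldsymbol\tau(S)$ is the distribution of $(\tau^{(1)}(x_1),\dots,\tau^{(n)}(x_n))$ with $\mathbf x$ uniform on $S$; $\mathcal U_n=\mathbb{F}_{p^w}^n$; $SD$ denotes statistical distance. *)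

(* Defs.v *)
From HB Require Import structures.
From mathcomp Require Import all_boot all_order all_algebra all_field.
From mathcomp Require Import all_classical all_reals all_analysis.
Set Implicit Arguments. Unset Strict Implicit. Unset Printing Implicit Defensive.
Import Order.TTheory GRing.Theory Num.Theory.
Local Open Scope ring_scope.

(* Vectors in F^n are row vectors 'rV[F]_n; x_i is x ord0 i.
   A leakage family tau = (tau^(1),...,tau^(n)) is tau : 'I_n -> F -> mu.-tuple bool,
   i.e. tau^(j) : F -> {0,1}^mu. *)

Definition sum_zero_code (F : finFieldType) (n : nat) : {set 'rV[F]_n} :=
  [set x : 'rV[F]_n | \sum_(i < n) x ord0 i == 0].

Definition full_space (F : finFieldType) (n : nat) : {set 'rV[F]_n} := [set: 'rV[F]_n]%SET.

Definition leak (F : finFieldType) (n mu : nat) (tau : 'I_n -> F -> mu.-tuple bool)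
  (x : 'rV[F]_n) : {ffun 'I_n -> mu.-tuple bool} :=
  [ffun i => tau i (x ord0 i)].

Definition leak_dist (R : realType) (F : finFieldType) (n mu : nat)
  (tau : 'I_n -> F -> mu.-tuple bool) (S : {set 'rV[F]_n})
  (y : {ffun 'I_n -> mu.-tuple bool}) : R :=
  #|[set x in S | leak tau x == y]|%:R / #|S|%:R.

Definition SD (R : realType) (T : finType) (P Q : T -> R) : R :=
  2^-1 * \sum_(y : T) `|P y - Q y|.

Definition c_mu (R : realType) (p mu : nat) : R :=
  (2 ^+ mu * sin (pi / 2 ^+ mu)) / (p%:R * sin (pi / p%:R)).

(* Main.v *)
Require Import Defs.
From HB Require Import structures.
From mathcomp Require Import all_boot all_order all_algebra all_field.
From mathcomp Require Import all_classical all_reals all_analysis.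
From mathcomp Require Import complex ring lra.
Import Order.TTheory GRing.Theory Num.Theory.

Module Aux.
Set Implicit Arguments. Unset Strict Implicit. Unset Printing Implicit Defensive.
Local Open Scope ring_scope.
Local Open Scope complex_scope.

Section CplxBasics.
Variable R : realType.
Local Notation C := R[i].
Local Notation Re := (@complex.Re R).

Definition nm (z : C) : R := Re `|z|.

Lemma nmE (z : C) : `|z| = (nm z)%:C.
Proof. by rewrite /nm normc_def. Qed.

Lemma nm_ge0 z : 0 <= nm z.
Proof. by have := normr_ge0 z; rewrite nmE -[0 : C]/(0%:C) lecR. Qed.

Lemma nmM x y : nm (x * y) = nm x * nm y.
Proof. by apply: (@complexI R); rewrite rmorphM /= -!nmE normrM. Qed.

Lemma nmD x y : nm (x + y) <= nm x + nm y.
Proof. by rewrite -(@lecR R) rmorphD /= -!nmE ler_normD. Qed.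

Lemma nm0 : nm 0 = 0.
Proof. by apply: (@complexI R); rewrite -nmE normr0. Qed.

Lemma nm_sum (I : Type) (r : seq I) (P : pred I) (f : I -> C) :
  nm (\sum_(i <- r | P i) f i) <= \sum_(i <- r | P i) nm (f i).
Proof.
elim/big_rec2: _ => [|i y x _ Hyx]; first by rewrite nm0.
by apply: le_trans (nmD _ _) _; rewrite lerD2l.
Qed.

Lemma nm_prod (I : Type) (r : seq I) (P : pred I) (f : I -> C) :
  nm (\prod_(i <- r | P i) f i) = \prod_(i <- r | P i) nm (f i).
Proof.
elim/big_rec2: _ => [|i y x _ <-]; last by rewrite nmM.
by apply: (@complexI R); rewrite -nmE normr1.
Qed.

Lemma nm_real (x : R) : nm x%:C = `|x|.
Proof. by apply: (@complexI R); rewrite -nmE; simpc; rewrite /= expr0n addr0 sqrtr_sqr. Qed.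

Lemma Re_real (x : R) : Re x%:C = x. Proof. by []. Qed.

Lemma ReD (x y : C) : Re (x + y) = Re x + Re y.
Proof. by case: x; case: y. Qed.

Lemma Re0 : Re (0 : C) = 0. Proof. by []. Qed.

Lemma Re_sum (I : Type) (r : seq I) (P : pred I) (f : I -> C) :
  Re (\sum_(i <- r | P i) f i) = \sum_(i <- r | P i) Re (f i).
Proof. by elim/big_rec2: _ => // i y x _ <-; rewrite ReD. Qed.

Lemma Re_le_nm (z : C) : Re z <= nm z.
Proof.
apply: le_trans (ler_norm _) _; rewrite -(@lecR R) -nmE.
exact: normc_ge_Re.
Qed.

Lemma nm_sqr (z : C) : ((nm z) ^+ 2)%:C = z * z^*%C.
Proof. by rewrite rmorphXn /= -nmE sqr_normc. Qed.

Lemma nm_conj (z : C) : nm (z^*)%C = nm z.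
Proof. by apply: (@complexI R); rewrite -!nmE normcJ. Qed.

Definition cis (t : R) : C := (cos t +i* sin t)%C.

Lemma cisD s t : cis (s + t) = cis s * cis t.
Proof.
rewrite /cis sinD cosD; apply/eqP; rewrite eq_complex /=.
by rewrite eqxx addrC eqxx.
Qed.

Lemma cis0 : cis 0 = 1.
Proof. by rewrite /cis sin0 cos0. Qed.

Lemma Re_cis t : Re (cis t) = cos t. Proof. by []. Qed.

Lemma cis_conj t : cis t * (cis t)^*%C = 1.
Proof.
rewrite /cis; apply/eqP; rewrite eq_complex /=.
rewrite !mulrN opprK -!expr2 cos2Dsin2 eqxx /=.
by rewrite [cos t * sin t]mulrC addNr.
Qed.

Lemma nm_cis t : nm (cis t) = 1.
Proof.
have h : ((nm (cis t))^+2)%:C = 1 by rewrite nm_sqr cis_conj.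
have : (nm (cis t))^+2 = 1 by move: h => [].
by move/eqP; rewrite sqrf_eq1 => /orP[/eqP//|/eqP h1]; have := nm_ge0 (cis t); rewrite h1 ler0N1.
Qed.

Lemma cis2pin (k : nat) t : cis (t + (pi *+ 2) *+ k) = cis t.
Proof.
by rewrite /cis (periodicn (@cosD2pi R)) (periodicn (@sinD2pi R)).
Qed.

End CplxBasics.

Local Open Scope ring_scope.
Local Open Scope complex_scope.

Section Trig.
Variable R : realType.
Local Notation C := R[i].
Local Notation Re := (@complex.Re R).
Local Notation pi := (@pi R).

Lemma cos_le_mono (x y : R) : 0 <= x -> x <= y -> y <= pi -> cos y <= cos x.
Proof.
move=> x0 xy ypi; have [->|xy'] := eqVneq x y; first by [].
have xlt : x < y by rewrite lt_neqAle xy'.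
apply/ltW; rewrite (@ltr_cos R) // in_itv /=; apply/andP; split => //; lra.
Qed.

Lemma sin_mid (x y : R) : 0 <= x <= pi -> 0 <= y <= pi ->
  sin x + sin y <= 2 * sin ((x + y) / 2).
Proof.
move=> /andP[x0 xp] /andP[y0 yp].
set s := (x + y) / 2; set d := (x - y) / 2.
have -> : x = s + d by rewrite /s /d; field.
have -> : y = s - d by rewrite /s /d; field.
rewrite sinD sinB.
have -> : sin s * cos d + cos s * sin d + (sin s * cos d - cos s * sin d)
   = 2 * sin s * cos d by ring.
rewrite -mulrA ler_pM2l //.
rewrite -[X in _ <= X]mulr1 ler_wpM2l ?cos_le1 //.
apply: sin_ge0_pi; rewrite /s; apply/andP; split; lra.
Qed.

Lemma sum_itv (s : seq R) : all (fun x => 0 <= x <= pi) s ->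
  0 <= \sum_(x <- s) x <= (size s)%:R * pi.
Proof.
elim: s => [|a s IH]; first by rewrite big_nil mul0r lexx.
move=> /= /andP[/andP[a0 ap] /IH /andP[h1 h2]].
rewrite big_cons -addn1 natrD mulrDl mul1r; apply/andP; split; lra.
Qed.

Lemma jensen_sin (k : nat) (s : seq R) : size s = (2 ^ k)%N ->
  all (fun x => 0 <= x <= pi) s ->
  \sum_(x <- s) sin x <= (2 ^ k)%:R * sin ((\sum_(x <- s) x) / (2 ^ k)%:R).
Proof.
elim: k s => [|k IH] s.
  rewrite expn0; case: s => [//|a [|//]] _ _.
  by rewrite !big_cons !big_nil !addr0 mul1r divr1.
move=> hs hall.
have h2 : (2 ^ k <= size s)%N by rewrite hs expnS leq_pmull.
rewrite -(cat_take_drop (2 ^ k) s) !big_cat /=.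
set s1 := take _ s; set s2 := drop _ s.
have hs1 : size s1 = (2 ^ k)%N by rewrite size_take hs expnS ltn_Pmull ?expn_gt0.
have hs2 : size s2 = (2 ^ k)%N by rewrite size_drop hs expnS mul2n -addnn addnK.
move: hall; rewrite -(cat_take_drop (2 ^ k) s) all_cat -/s1 -/s2 => /andP[ha1 ha2].
have K0 : 0 < (2 ^ k)%:R :> R by rewrite ltr0n expn_gt0.
apply: le_trans (lerD (IH _ hs1 ha1) (IH _ hs2 ha2)) _.
rewrite -mulrDr expnS natrM -mulrA mulrCA ler_pM2l //.
have := sum_itv ha1; have := sum_itv ha2; rewrite hs1 hs2.
set S1 := \sum_(x <- s1) x; set S2 := \sum_(x <- s2) x.
set K := (2 ^ k)%:R => /andP[a1 a2] /andP[b1 b2].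
have e1 : 0 <= S1 / K <= pi.
  by apply/andP; split; [exact: divr_ge0 _ (ltW K0) | rewrite ler_pdivrMr // mulrC].
have e2 : 0 <= S2 / K <= pi.
  by apply/andP; split; [exact: divr_ge0 _ (ltW K0) | rewrite ler_pdivrMr // mulrC].
apply: le_trans (sin_mid e1 e2) _.
have -> : (S1 / K + S2 / K) / 2 = (S1 + S2) / (2 * K).
  by field; rewrite gt_eqF.
by [].
Qed.

Lemma cos_telescope (y d : R) (m : nat) :
  2 * sin d * \sum_(i < m) cos (y + 2 * i%:R * d)
  = sin (y + (2 * m%:R - 1) * d) - sin (y - d).
Proof.
elim: m => [|m IH].
  by rewrite big_ord0 mulr0 mulr0 sub0r mulN1r subrr.
rewrite big_ord_recr /= mulrDr IH.
set z := y + 2 * m%:R * d.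
have -> : y + (2 * m.+1%:R - 1) * d = z + d.
  by rewrite /z [m.+1%:R]mulrSr; ring.
have -> : y + (2 * m%:R - 1) * d = z - d.
  by rewrite /z; ring.
rewrite [sin (z + d)]sinD [sin (z - d)]sinB; ring.
Qed.

Lemma cos_per2 (x : R) : cos (x - pi *+ 2) = cos x.
Proof. by rewrite -{2}(subrK (pi *+ 2) x) cosD2pi. Qed.

Lemma sin_per2 (x : R) : sin (x - pi *+ 2) = sin x.
Proof. by rewrite -{2}(subrK (pi *+ 2) x) sinD2pi. Qed.

Lemma polar (u : C) : nm u = 1 ->
  exists th : R, u = cis th /\ - (pi * 3) <= th <= - pi.
Proof.
case: u => a b; rewrite /nm normc_def /= => h.
have hab : a ^+ 2 + b ^+ 2 = 1.
  by rewrite -(@sqr_sqrtr R (a ^+ 2 + b ^+ 2)) ?h ?expr1n // addr_ge0 ?sqr_ge0.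
have ha : -1 <= a <= 1.
  have hb2 := sqr_ge0 b.
  apply/andP; split; nra.
have hc : cos (acos a) = a by rewrite acosK // in_itv.
have hs : sin (acos a) = `|b|.
  rewrite sin_acos // -hab addrAC subrr add0r sqrtr_sqr //.
have t0 := acos_ge0 ha; have t1 := acos_lepi ha.
have [b0|b0] := leP 0 b.
  exists (acos a - pi *+ 2); split.
    by rewrite /cis cos_per2 sin_per2 hc hs ger0_norm.
  apply/andP; split; rewrite mulr2n; lra.
exists (- acos a - pi *+ 2); split.
  by rewrite /cis cos_per2 sin_per2 cosN sinN hc hs ltr0_norm ?opprK.
apply/andP; split; rewrite mulr2n; lra.
Qed.

End Trig.

Local Open Scope ring_scope.
Local Open Scope complex_scope.

Section Roots.
Variable R : realType.
Local Notation C := R[i].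
Local Notation Re := (@complex.Re R).
Local Notation pi := (@pi R).
Variable p : nat.
Hypothesis hp : prime p.

Definition ang (k : nat) : R := (pi *+ 2) * k%:R / p%:R.
Definition ee (u : 'F_p) : C := cis (ang u).

Lemma p_gt0 : (0 < p)%N. Proof. exact: prime_gt0. Qed.
Lemma pR_gt0 : 0 < p%:R :> R. Proof. by rewrite ltr0n p_gt0. Qed.

Lemma val_Fp_nat k : val (k%:R : 'F_p) = (k %% p)%N.
Proof. by rewrite Zp_nat /= Fp_cast. Qed.

Lemma cis_ang_mod k : cis (ang (k %% p)) = cis (ang k).
Proof.
have -> : ang k = ang (k %% p) + (pi *+ 2) *+ (k %/ p).
  rewrite {1}(divn_eq k p) /ang natrD natrM -mulr_natr.
  have hp0 := pR_gt0; field; lra.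
by rewrite cis2pin.
Qed.

Lemma ee_nat k : ee (k%:R) = cis (ang k).
Proof. by rewrite /ee val_Fp_nat cis_ang_mod. Qed.

Lemma ee_val (u : 'F_p) : ee u = cis (ang u).
Proof. by []. Qed.

Lemma ee0 : ee 0 = 1.
Proof. by rewrite /ee /ang /= mulr0 mul0r cis0. Qed.

Lemma angD a b : ang (a + b) = ang a + ang b.
Proof. by rewrite /ang natrD mulrDr mulrDl. Qed.

Lemma eeD u v : ee (u + v) = ee u * ee v.
Proof.
rewrite -[u]natr_Zp -[v]natr_Zp -natrD !ee_nat angD cisD //.
Qed.

Lemma eeN u : (ee u)^*%C = ee (- u).
Proof.
have h1 : ee u * ee (- u) = 1 by rewrite -eeD subrr ee0.
have h2 : ee u * (ee u)^*%C = 1 by rewrite /ee cis_conj.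
have hu : ee u != 0.
  by apply/eqP => h; move: h1; rewrite h mul0r => /eqP; rewrite eq_sym oner_eq0.
by apply: (mulfI hu); rewrite h1 h2.
Qed.

Lemma nm_ee u : nm (ee u) = 1.
Proof. exact: nm_cis. Qed.

Lemma ee_neq1 u : u != 0 -> ee u != 1.
Proof.
move=> hu; apply/eqP => h.
have hv : (0 < val u < p)%N.
  have h0 : val u != 0%N by apply: contra hu => /eqP h0; apply/eqP/val_inj.
  by rewrite lt0n h0 /= -{2}(Fp_cast hp) ltn_ord.
have : Re (ee u) = 1 by rewrite h.
clear h.
rewrite /ee Re_cis.
set x := ang u.
have -> : x = (x / 2) *+ 2 by rewrite -mulr_natr mulfVK // pnatr_eq0.
rewrite cos_mulr2n cos2sin2.
have : 0 < sin (x / 2).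
  apply: sin_gt0_pi; rewrite /x /ang.
  case/andP: hv => h0 h1.
  have hu0 : 0 < (val u)%:R :> R by rewrite ltr0n.
  have hup : (val u)%:R < p%:R :> R by rewrite ltr_nat.
  have hpi := pi_gt0 R; have hp0 := pR_gt0.
  have -> : (pi *+ 2) * (val u)%:R / p%:R / 2 = pi * ((val u)%:R / p%:R).
    by rewrite mulr2n; field; lra.
  have q0 : 0 < (val u)%:R / p%:R :> R by apply: divr_gt0.
  have q1 : (val u)%:R / p%:R < 1 :> R by rewrite ltr_pdivrMr // mul1r.
  apply/andP; split; nra.
move=> hs; nra.
Qed.

End Roots.

Local Open Scope ring_scope.
Local Open Scope complex_scope.

Section KL.
Variable R : realType.
Local Notation C := R[i].
Local Notation Re := (@complex.Re R).
Local Notation pi := (@pi R).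

Lemma unit_dir (w : C) : exists u, nm u = 1 /\ nm w = Re (u * w).
Proof.
have [->|w0] := eqVneq w 0.
  exists 1; split; last by rewrite mulr0 nm0.
  by apply: (@complexI R); rewrite -nmE normr1.
have nw : nm w != 0.
  by apply: contra w0 => /eqP h; rewrite -normr_eq0 nmE h.
exists ((w^*)%C / (nm w)%:C); split.
  rewrite nmM nm_conj.
  have -> : nm ((nm w)%:C)^-1 = (nm w)^-1.
    apply: (@complexI R); rewrite -[(nm (_^-1))%:C]nmE normfV nmE nm_real.
    by rewrite ger0_norm ?nm_ge0 // fmorphV.
  by rewrite mulfV.
by rewrite mulrAC [(w^*)%C * w]mulrC -nm_sqr -fmorphV -rmorphM Re_real expr2 mulfK.
Qed.

Lemma sum_sign (I : finType) (P Q : pred I) (f : I -> R) :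
  (forall i, P i -> ~~ Q i -> f i <= 0) ->
  (forall i, Q i -> ~~ P i -> 0 <= f i) ->
  \sum_(i | P i) f i <= \sum_(i | Q i) f i.
Proof.
move=> h1 h2.
rewrite (bigID Q) /= [X in _ <= X](bigID P) /=.
rewrite (eq_bigl (fun i => Q i && P i)); last by move=> i; rewrite andbC.
apply: lerD => //.
  apply: le_trans (_ : 0 <= _); first by apply: sumr_le0 => i /andP[]; exact: h1.
by apply: sumr_ge0 => i /andP[]; exact: h2.
Qed.

Variable p : nat.
Hypothesis hp : prime p.
Local Notation ee := (@ee R p).
Local Notation ang := (@ang R p).

Lemma KL (G : {set 'F_p}) :
  nm (\sum_(j in G) ee j) <= sin (pi * #|G|%:R / p%:R) / sin (pi / p%:R).
Proof.
set w := \sum_(j in G) ee j; set m := #|G|.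
have hmp : (m <= p)%N by apply: leq_trans (max_card _) _; rewrite card_Fp.
have hp0 := pR_gt0 R hp.
have hp1 : 1 < p%:R :> R by rewrite ltr1n prime_gt1.
have hpi := pi_gt0 R.
set d := pi / p%:R.
have hd : 0 < d by apply: divr_gt0.
have hdp : d * p%:R = pi by rewrite /d mulfVK // gt_eqF.
have hmR : m%:R <= p%:R :> R by rewrite ler_nat.
have hm0 : 0 <= m%:R :> R by [].
have hdm : d * m%:R <= pi by rewrite -hdp ler_pM2l.
have hdm0 : 0 <= d * m%:R by apply: mulr_ge0 => //; exact: ltW.
have -> : pi * m%:R / p%:R = d * m%:R by rewrite /d mulrAC.
have sd : 0 < sin d.
  apply: sin_gt0_pi; rewrite hd /= /d ltr_pdivrMr // -[X in X < _]mulr1 ltr_pM2l //.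
have [u [hu hw]] := unit_dir w.
have [th [hut hth]] := polar hu.
set lam := cos (d * m%:R).
have angE k : ang k = 2 * k%:R * d by rewrite /ang /d mulr2n; field; lra.
have E1 : nm w = \sum_(j in G) cos (th + ang j).
  rewrite hw /w mulr_sumr Re_sum; apply: eq_bigr => j _.
  by rewrite hut ee_val -cisD Re_cis.
have E2 : nm w = \sum_(j in G) (cos (th + ang j) - lam) + m%:R * lam.
  rewrite E1 sumrB sumr_const -/m mulr_natl; ring.
set t := - th / (2 * d) - (m%:R - 1) / 2.
have ht0 : 0 <= t + 1 / 2.
  rewrite /t.
  have : - th / (2 * d) = (- th) * p%:R / (2 * pi).
    by rewrite /d; field; apply/andP; split; lra.
  move=> ->.
  have : pi * p%:R <= (- th) * p%:R by rewrite ler_pM2r //; lra.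
  move=> h2.
  have : p%:R / 2 <= (- th) * p%:R / (2 * pi).
    rewrite ler_pdivlMr ?mulr_gt0 //; lra.
  lra.
set j0 := Num.truncn (t + 1 / 2).
have [hj1 hj2] : j0%:R <= t + 1 / 2 /\ t + 1 / 2 < j0%:R + 1.
  have := truncn_itv ht0.
  move=> /andP[a b]; split; first exact: a.
  by rewrite natr1.
set psi := fun i : nat => th + ang (j0 + i).
set c := th + 2 * j0%:R * d + (m%:R - 1) * d.
have htd : 2 * d * t = - th - (m%:R - 1) * d by rewrite /t; field; lra.
have hc1 : c <= d.
  have : 2 * d * j0%:R <= 2 * d * (t + 1 / 2) by rewrite ler_pM2l // mulr_gt0.
  rewrite mulrDr htd /c; lra.
have hc2 : - d < c.
  have : 2 * d * (t + 1 / 2) < 2 * d * (j0%:R + 1) by rewrite ltr_pM2l // mulr_gt0.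
  rewrite mulrDr htd /c; lra.
have psiE i : psi i = c + d * (2 * i%:R - m%:R + 1).
  by rewrite /psi angD !angE /c; ring.
have B1 i : (i < m)%N -> lam <= cos (psi i).
  move=> him.
  have hi : i%:R + 1 <= m%:R :> R by rewrite natr1 ler_nat.
  have hi0 : 0 <= i%:R :> R by [].
  have a1 : psi i <= d * m%:R by rewrite psiE; nra.
  have a2 : - (d * m%:R) <= psi i by rewrite psiE; nra.
  rewrite -cos_norm; apply: cos_le_mono => //.
  by rewrite ler_norml a1 a2.
have B2 i : (m <= i)%N -> (i < p)%N -> cos (psi i) <= lam.
  move=> hmi hip.
  have hi : m%:R <= i%:R :> R by rewrite ler_nat.
  have hi2 : i%:R + 1 <= p%:R :> R by rewrite natr1 ler_nat.
  have a1 : d * m%:R <= psi i by rewrite psiE; nra.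
  have a2 : psi i <= pi *+ 2 - d * m%:R by rewrite psiE mulr2n; nra.
  have [hle|hgt] := lerP (psi i) pi.
    by apply: cos_le_mono.
  rewrite -cos_per2 -cosN; apply: cos_le_mono => //; rewrite mulr2n; lra.
set h := fun j : 'F_p => cos (th + ang j) - lam.
have E3 : \sum_(j in G) h j = \sum_(j | (j0%:R + j) \in G) h (j0%:R + j).
  exact: (reindex_inj (addrI (j0%:R : 'F_p))).
have cam x k : cos (x + ang (k %% p)) = cos (x + ang k).
  by rewrite -!Re_cis !cisD cis_ang_mod.
have hs j : h (j0%:R + j) = cos (psi j) - lam.
  rewrite /h -[j in j0%:R + j]natr_Zp -natrD /= val_Fp_nat // cam.
  done.
have hjp (j : 'F_p) : (j < p)%N by rewrite -{2}(Fp_cast hp) ltn_ord.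
have E4 : \sum_(j | (j0%:R + j) \in G) h (j0%:R + j)
    <= \sum_(j : 'F_p | (j < m)%N) h (j0%:R + j).
  apply: sum_sign => j h1 h2.
    by rewrite hs subr_le0; apply: B2 => //; rewrite leqNgt.
  by rewrite hs subr_ge0; apply: B1.
have hmP : (m <= (Zp_trunc (pdiv p)).+2)%N by rewrite Fp_cast.
have E5 : \sum_(j : 'F_p | (j < m)%N) h (j0%:R + j)
    = \sum_(i < m) (cos (psi i) - lam).
  rewrite (big_ord_widen _ (fun i => cos (psi i) - lam) hmP).
  by apply: eq_bigr => j _; rewrite hs.
have E6 : \sum_(i < m) (cos (psi i) - lam) = \sum_(i < m) cos (psi i) - m%:R * lam.
  by rewrite sumrB sumr_const card_ord mulr_natl.
set y := th + ang j0.
have T := cos_telescope y d m.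
have psiy (i : nat) : psi i = y + 2 * i%:R * d by rewrite /psi /y angD addrA (angE i).
have E6' : \sum_(i < m) cos (psi i) = \sum_(i < m) cos (y + 2 * i%:R * d).
  by apply: eq_bigr => i _; rewrite psiy.
rewrite E6' in E6.
have hcy : c = y + (m%:R - 1) * d by rewrite /c /y angE.
have T2 : sin (y + (2 * m%:R - 1) * d) - sin (y - d) = 2 * cos c * sin (d * m%:R).
  have -> : y + (2 * m%:R - 1) * d = c + d * m%:R by rewrite hcy; ring.
  have -> : y - d = c - d * m%:R by rewrite hcy; ring.
  rewrite sinD sinB; ring.
rewrite T2 in T.
have hsum : \sum_(i < m) cos (y + 2 * i%:R * d) = cos c * sin (d * m%:R) / sin d.
  apply: (mulfI (_ : 2 * sin d != 0)); first by rewrite mulf_neq0 ?gt_eqF.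
  rewrite T; field; rewrite gt_eqF //.
have sdm : 0 <= sin (d * m%:R) by apply: sin_ge0_pi; rewrite hdm0 hdm.
rewrite E2 E3.
apply: le_trans (lerD (E4) (lexx _)) _.
rewrite E5 E6 hsum addrNK ler_pdivrMr // divfK ?gt_eqF //.
by rewrite -[X in _ <= X]mul1r ler_wpM2r // cos_le1.
Qed.

End KL.

Local Open Scope ring_scope.
Local Open Scope complex_scope.

Section CB.
Variable R : realType.
Local Notation C := R[i].
Local Notation Re := (@complex.Re R).
Local Notation pi := (@pi R).

Lemma exists_max (B : finType) (b0 : B) (f : B -> R) :
  exists b, forall b', f b' <= f b.
Proof.
case: (@arg_maxP _ _ B b0 xpredT f isT) => b _ H.
by exists b => b'; apply: H.
Qed.

Variable p : nat.
Hypothesis hp : prime p.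
Local Notation ee := (@ee R p).

Lemma cbound_gen (T B : finType) (L : T -> 'F_p) (r : nat)
  (hfib : forall u, #|[set x | L x == u]| = r) (beta : T -> B) (b0 : B)
  (k : nat) (hB : #|B| = (2 ^ k)%N) :
  \sum_b nm (\sum_(x | beta x == b) ee (L x))
   <= r%:R * ((2 ^ k)%:R * sin (pi / (2 ^ k)%:R) / sin (pi / p%:R)).
Proof.
set z := fun b => \sum_(x | beta x == b) ee (L x).
have [u hu] := choice (fun b => unit_dir (z b)).
have [ga hga] := choice (fun j : 'F_p => exists_max b0 (fun b => Re (u b * ee j))).
set g := fun j : 'F_p => Re (u (ga j) * ee j).
have S1 : \sum_b nm (z b) = \sum_x Re (u (beta x) * ee (L x)).
  rewrite (partition_big beta xpredT) //=.
  apply: eq_bigr => b _; rewrite (proj2 (hu b)) /z mulr_sumr Re_sum.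
  by apply: eq_bigr => x /eqP ->.
have S2 : \sum_x Re (u (beta x) * ee (L x)) <= \sum_x g (L x).
  by apply: ler_sum => x _; apply: hga.
have S3 : \sum_x g (L x) = r%:R * \sum_j g j.
  rewrite (partition_big L xpredT) //= mulr_sumr; apply: eq_bigr => j _.
  rewrite (eq_bigr (fun _ => g j)); last by move=> x /eqP ->.
  rewrite sumr_const mulr_natl; congr (_ *+ _).
  by rewrite -(hfib j); apply: eq_card => x; rewrite !inE.
have S4 : \sum_j g j <= \sum_b nm (\sum_(j in [set j | ga j == b]) ee j).
  rewrite (partition_big ga xpredT) //=; apply: ler_sum => b _.
  rewrite (eq_bigr (fun j => Re (u b * ee j))); last by move=> j /eqP <-.
  rewrite -Re_sum -mulr_sumr; apply: le_trans (Re_le_nm _) _.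
  rewrite nmM (proj1 (hu b)) mul1r.
  by rewrite (eq_bigl (fun j => ga j == b)) // => j; rewrite inE.
set mb := fun b => #|[set j | ga j == b]|.
have S5 : \sum_b nm (\sum_(j in [set j | ga j == b]) ee j)
   <= (\sum_b sin (pi * (mb b)%:R / p%:R)) / sin (pi / p%:R).
  by rewrite mulr_suml; apply: ler_sum => b _; apply: KL.
have hsum : (\sum_b mb b)%N = p.
  rewrite -(card_Fp hp) -sum1_card.
  rewrite (partition_big ga xpredT) //=; apply: eq_bigr => b _.
  by rewrite /mb -sum1_card; apply: eq_bigl => j; rewrite inE.
have hp0 := pR_gt0 R hp.
have hpi := pi_gt0 R.
set s := [seq pi * (mb b)%:R / p%:R | b <- enum B].
have S6 : \sum_b sin (pi * (mb b)%:R / p%:R) = \sum_(x <- s) sin x.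
  by rewrite big_map big_enum.
have S7 : \sum_(x <- s) x = pi.
  rewrite big_map big_enum /= -mulr_suml -mulr_sumr -natr_sum hsum.
  by rewrite mulfK // gt_eqF.
have hs : size s = (2 ^ k)%N by rewrite size_map -cardE hB.
have hall : all (fun x => 0 <= x <= pi) s.
  apply/allP => x /mapP[b _ ->]; apply/andP; split.
    by apply: divr_ge0; [apply: mulr_ge0 => //; exact: ltW | exact: ltW].
  rewrite ler_pdivrMr // ler_pM2l //  ler_nat /mb.
  by apply: leq_trans (max_card _) _; rewrite card_Fp.
have J := jensen_sin hs hall.
rewrite S7 in J.
have spp : 0 < sin (pi / p%:R).
  apply: sin_gt0_pi; rewrite divr_gt0 //= ltr_pdivrMr // -[X in X < _]mulr1 ltr_pM2l //.
  by rewrite ltr1n prime_gt1.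
have hr0 : 0 <= r%:R :> R by [].
rewrite -/z S1; apply: le_trans S2 _; rewrite S3 ler_wpM2l //.
apply: le_trans S4 _; apply: le_trans S5 _.
by rewrite ler_pM2r ?invr_gt0 // S6.
Qed.

End CB.

Local Open Scope ring_scope.

Lemma prod_sum_row (V : comPzRingType) (T : finType) (n : nat) (f : 'I_n -> T -> V) :
  \sum_(x : 'rV[T]_n) \prod_i f i (x ord0 i) = \prod_i \sum_z f i z.
Proof.
rewrite bigA_distr_bigA /=.
rewrite (reindex (fun g : {ffun 'I_n -> T} => \row_i g i)).
  by apply: eq_bigr => g _; apply: eq_bigr => i _; rewrite mxE.
exists (fun x : 'rV[T]_n => [ffun i => x ord0 i]) => [g _|x _].
  by apply/ffunP => i; rewrite ffunE mxE.
by apply/rowP => i; rewrite !mxE ffunE.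
Qed.

Lemma forall_prod (V : comPzSemiRingType) (I : finType) (P : pred I) :
  ([forall i, P i])%:R = \prod_i (P i)%:R :> V.
Proof.
case: (boolP [forall i, P i]) => [/forallP h|].
  by rewrite big1 // => i _; rewrite h.
rewrite negb_forall => /existsP[i hi].
by rewrite (bigD1 i) //= (negbTE hi) mul0r.
Qed.

Lemma cardR (V : pzSemiRingType) (T : finType) (A : {set T}) :
  (#|A|%:R : V) = \sum_x (x \in A)%:R.
Proof.
rewrite -sum1_card natr_sum big_mkcond /=.
by apply: eq_bigr => x _; case: (x \in A).
Qed.

Section SqSum.
Variable R : realType.

Lemma sq_sum_le (I : finType) (f : I -> R) :
  (\sum_i f i) ^+ 2 <= #|I|%:R * \sum_i f i ^+ 2.
Proof.
rewrite expr2 mulr_suml.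
have h : forall i j, f i * f j <= (f i ^+ 2 + f j ^+ 2) / 2.
  move=> i j; have := sqr_ge0 (f i - f j); nra.
apply: le_trans (_ : \sum_i \sum_j (f i ^+ 2 + f j ^+ 2) / 2 <= _).
  apply: ler_sum => i _; rewrite mulr_sumr; apply: ler_sum => j _; exact: h.
rewrite le_eqVlt; apply/orP; left; apply/eqP.
set S := \sum_i f i ^+ 2.
have e1 : forall i, \sum_j (f i ^+ 2 + f j ^+ 2) / 2 = (#|I|%:R * f i ^+ 2 + S) / 2.
  by move=> i; rewrite -mulr_suml big_split /= sumr_const mulr_natl.
rewrite (eq_bigr _ (fun i _ => e1 i)) -mulr_suml big_split /= -mulr_sumr.
by rewrite sumr_const mulr_natl -/S; field.
Qed.
End SqSum.

Local Open Scope ring_scope.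
Local Open Scope complex_scope.

Section Fourier.
Variable R : realType.
Local Notation C := R[i].
Variable F : finFieldType.
Variable K : finType.
Variable k0 : K.
Variable chi : K -> F -> C.
Variable c : R.
Variable mu : nat.
Hypothesis chiD : forall k x y, chi k (x + y) = chi k x * chi k y.
Hypothesis chiJ : forall k x, (chi k x)^*%C = chi k (- x).
Hypothesis chi0 : forall k, chi k 0 = 1.
Hypothesis chik0 : forall x, chi k0 x = 1.
Hypothesis orthK : forall s, \sum_k chi k s = if s == 0 then #|F|%:R else 0.
Hypothesis orthG : forall k, k != k0 -> \sum_x chi k x = 0.
Hypothesis cb : forall k, k != k0 -> forall beta : F -> mu.-tuple bool,
  \sum_b nm (\sum_(x | beta x == b) chi k x) <= #|F|%:R * c.
Hypothesis c0 : 0 <= c.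

Local Notation q := #|F|.

Lemma conj_sum (I : Type) (r : seq I) (P : pred I) (f : I -> C) :
  (\sum_(i <- r | P i) f i)^*%C = \sum_(i <- r | P i) (f i)^*%C.
Proof.
elim/big_rec2: _ => [|i y x _ <-]; first exact: conjc0.
by rewrite rmorphD.
Qed.

Lemma parseval (A : {set F}) :
  \sum_k nm (\sum_(z in A) chi k z) ^+ 2 = q%:R * #|A|%:R.
Proof.
apply: (@complexI R); rewrite rmorph_sum rmorphM /= !rmorph_nat.
under eq_bigr do rewrite nm_sqr conj_sum mulr_suml.
have e1 k : \sum_(z in A) chi k z * \sum_(z' in A) (chi k z')^*%C
     = \sum_(z in A) \sum_(z' in A) chi k (z - z').
  by apply: eq_bigr => z _; rewrite mulr_sumr; apply: eq_bigr => z' _; rewrite chiJ chiD.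
under eq_bigr do rewrite e1.
rewrite exchange_big /=.
rewrite (eq_bigr (fun z => q%:R)).
  by rewrite sumr_const mulr_natr.
move=> z zA; rewrite exchange_big /= (bigD1 z zA) /= orthK subrr eqxx big1 ?addr0 //.
by move=> z' /andP[_ hz]; rewrite orthK subr_eq0 eq_sym (negbTE hz).
Qed.

Lemma chi_sum k n (x : 'rV[F]_n) :
  chi k (\sum_i x ord0 i) = \prod_i chi k (x ord0 i).
Proof. exact: (big_morph (chi k) (chiD k) (chi0 k)). Qed.

Lemma eq0_chi (s : F) : ((s == 0)%:R : C) = q%:R^-1 * \sum_k chi k s.
Proof.
have q0 : (q%:R : C) != 0 by rewrite pnatr_eq0 -lt0n; apply/card_gt0P; exists 0.
by rewrite orthK; case: eqP => _; rewrite ?mulr0 // mulVf.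
Qed.

Variable m : nat.
Local Notation n := m.+2.
Variable tau : 'I_n -> F -> mu.-tuple bool.

Definition Ah i k b := \sum_(z | tau i z == b) chi k z.

Lemma AhE i k b : Ah i k b = \sum_z chi k z * (tau i z == b)%:R.
Proof.
rewrite /Ah big_mkcond; apply: eq_bigr => z _.
by case: eqP => _; rewrite ?mulr1 ?mulr0.
Qed.

Lemma leakE x y : (leak tau x == y) = [forall i, tau i (x ord0 i) == y i].
Proof.
apply/eqP/forallP => [<- i|h]; first by rewrite ffunE.
by apply/ffunP => i; rewrite ffunE; apply/eqP/h.
Qed.

Lemma NU y : (#|[set x in full_space F n | leak tau x == y]|%:R : C)
   = \prod_i Ah i k0 (y i).
Proof.
rewrite cardR.
rewrite (eq_bigr (fun x : 'rV[F]_n => \prod_i ((tau i (x ord0 i) == y i)%:R : C))); last first.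
  by move=> x _; rewrite inE /full_space !inE /= leakE forall_prod.
rewrite (prod_sum_row (fun i z => ((tau i z == y i)%:R : C))).
by apply: eq_bigr => i _; rewrite AhE; apply: eq_bigr => z _; rewrite chik0 mul1r.
Qed.

Lemma NC y : (#|[set x in sum_zero_code F n | leak tau x == y]|%:R : C)
   = q%:R^-1 * \sum_k \prod_i Ah i k (y i).
Proof.
rewrite cardR.
rewrite (eq_bigr (fun x : 'rV[F]_n => q%:R^-1 * \sum_k (\prod_i chi k (x ord0 i)
   * \prod_i ((tau i (x ord0 i) == y i)%:R : C)))); last first.
  move=> x _; rewrite inE /sum_zero_code !inE -mulnb natrM leakE forall_prod eq0_chi.
  rewrite -mulrA mulr_suml; congr (_ * _); apply: eq_bigr => k _; rewrite chi_sum //.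
rewrite -mulr_sumr; congr (_ * _).
rewrite exchange_big /=; apply: eq_bigr => k _.
rewrite (eq_bigr (fun x : 'rV[F]_n => \prod_i (chi k (x ord0 i) * ((tau i (x ord0 i) == y i)%:R : C)))); last first.
  by move=> x _; rewrite big_split.
rewrite (prod_sum_row (fun i z => chi k z * ((tau i z == y i)%:R : C))).
by apply: eq_bigr => i _; rewrite AhE.
Qed.

Lemma NCset : (#|sum_zero_code F n|%:R : C) = q%:R ^+ m.+1.
Proof.
rewrite cardR.
rewrite (eq_bigr (fun x : 'rV[F]_n => q%:R^-1 * \sum_k \prod_i chi k (x ord0 i))); last first.
  move=> x _; rewrite /sum_zero_code !inE eq0_chi; congr (_ * _).
  by apply: eq_bigr => k _; rewrite chi_sum.
rewrite -mulr_sumr exchange_big /=.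
rewrite (eq_bigr (fun k => \prod_(i < n) \sum_z chi k z)); last first.
  by move=> k _; rewrite (prod_sum_row (fun i z => chi k z)).
rewrite (bigD1 k0) //= [\sum_(k | k != k0) _]big1 ?addr0; last first.
  by move=> k hk; rewrite big_ord_recl orthG // mul0r.
have -> : \sum_z chi k0 z = q%:R.
  by rewrite (eq_bigr (fun _ => 1)) ?sumr_const // => z _; rewrite chik0.
rewrite prodr_const card_ord.
have q0 : (q%:R : C) != 0 by rewrite pnatr_eq0 -lt0n; apply/card_gt0P; exists 0.
by rewrite exprS mulKf.
Qed.

Lemma Nfull : #|full_space F n| = (q ^ n)%N.
Proof. by rewrite /full_space cardsT card_mx mul1n. Qed.

Lemma card_fibers i : \sum_(b : mu.-tuple bool) #|[set z | tau i z == b]|%:R = q%:R :> R.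
Proof.
rewrite -natr_sum; congr (_%:R).
rewrite -sum1_card (partition_big (tau i) xpredT) //=; apply: eq_bigr => b _.
by rewrite -sum1_card; apply: eq_bigl => z; rewrite inE.
Qed.

Lemma S2_bound i : \sum_k (\sum_b nm (Ah i k b)) ^+ 2
   <= #|{: mu.-tuple bool}|%:R * (q%:R * q%:R).
Proof.
apply: le_trans (ler_sum _ (fun k _ => sq_sum_le (fun b => nm (Ah i k b)))) _.
rewrite -mulr_sumr exchange_big /= ler_wpM2l //.
rewrite (eq_bigr (fun b => q%:R * #|[set z | tau i z == b]|%:R)).
  by rewrite -mulr_sumr card_fibers.
move=> b _; rewrite -parseval; apply: eq_bigr => k _; rewrite /Ah.
by rewrite (eq_bigl (fun z => z \in [set z | tau i z == b])) // => z; rewrite inE.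
Qed.

Theorem fourier_SD :
  SD (leak_dist R tau (sum_zero_code F n)) (leak_dist R tau (full_space F n))
   <= 2^-1 * #|{: mu.-tuple bool}|%:R * c ^+ m.
Proof.
set N := #|{: mu.-tuple bool}|.
have qpos : (0 < q)%N by apply/card_gt0P; exists 0.
have q0R : 0 < q%:R :> R by rewrite ltr0n.
have q0C : (q%:R : C) != 0 by rewrite pnatr_eq0 -lt0n.
set S := fun i k => \sum_b nm (Ah i k b).
have hD y : `|leak_dist R tau (sum_zero_code F n) y - leak_dist R tau (full_space F n) y|
   <= (q%:R ^+ n)^-1 * \sum_(k | k != k0) \prod_i nm (Ah i k (y i)).
  have E : ((leak_dist R tau (sum_zero_code F n) y - leak_dist R tau (full_space F n) y)%:C : C)
     = ((q%:R ^+ n)^-1 : R)%:C * \sum_(k | k != k0) \prod_i Ah i k (y i).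
    rewrite /leak_dist rmorphB /= !fmorph_div /= !rmorph_nat NC NU NCset Nfull.
    rewrite (bigD1 k0) //= fmorphV rmorphXn /= rmorph_nat natrX.
    move: (\prod_(i < n) Ah i k0 (y i)) (\sum_(i | i != k0) \prod_(i0 < n) Ah i0 i (y i0)) => a b.
    by rewrite !exprS; field; rewrite expf_neq0 ?q0C.
  have := nm_real (leak_dist R tau (sum_zero_code F n) y - leak_dist R tau (full_space F n) y).
  move=> <-.
  rewrite E nmM (@nm_real R) ger0_norm; last by rewrite invr_ge0 exprn_ge0 // ltW.
  rewrite ler_wpM2l ?invr_ge0 ?exprn_ge0 ?(ltW q0R) //.
  apply: le_trans (nm_sum _ _ _) _; apply: ler_sum => k _; rewrite nm_prod //.
rewrite /SD.
have H1 : \sum_y `|leak_dist R tau (sum_zero_code F n) y - leak_dist R tau (full_space F n) y|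
   <= \sum_(y : {ffun 'I_n -> mu.-tuple bool}) ((q%:R ^+ n)^-1 * \sum_(k | k != k0) \prod_i nm (Ah i k (y i))).
  by apply: ler_sum => y _; apply: hD.
have H2 : \sum_(y : {ffun 'I_n -> mu.-tuple bool}) ((q%:R ^+ n)^-1 * \sum_(k | k != k0) \prod_i nm (Ah i k (y i)))
   = (q%:R ^+ n)^-1 * \sum_(k | k != k0) \prod_i S i k.
  rewrite -mulr_sumr exchange_big /=; congr (_ * _); apply: eq_bigr => k _.
  by rewrite /S bigA_distr_bigA.
have Spos i k : 0 <= S i k by apply: sumr_ge0 => b _; exact: nm_ge0.
have qc0 : 0 <= q%:R * c by apply: mulr_ge0 => //; exact: ltW.
have H3 k : k != k0 -> \prod_i S i k <= S ord0 k * S (lift ord0 ord0) k * (q%:R * c) ^+ m.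
  move=> hk; rewrite big_ord_recl big_ord_recl mulrA.
  apply: ler_wpM2l; first by apply: mulr_ge0.
  apply: le_trans (_ : _ <= \prod_(i < m) (q%:R * c)) _; last by rewrite prodr_const card_ord.
  apply: ler_prod => i _; rewrite Spos /=.
  exact: (cb hk (tau (lift ord0 (lift ord0 i)))).
have H4 : \sum_(k | k != k0) \prod_i S i k
    <= (q%:R * c) ^+ m * \sum_k (S ord0 k * S (lift ord0 ord0) k).
  apply: le_trans (ler_sum _ H3) _.
  rewrite -mulr_suml mulrC ler_wpM2l ?exprn_ge0 //.
  rewrite [X in _ <= X](bigD1 k0) //= lerDr.
  by apply: mulr_ge0.
have H5 : \sum_k (S ord0 k * S (lift ord0 ord0) k) <= N%:R * (q%:R * q%:R).
  apply: le_trans (_ : _ <= \sum_k ((S ord0 k ^+ 2 + S (lift ord0 ord0) k ^+ 2) / 2)) _.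
    apply: ler_sum => k _; have := sqr_ge0 (S ord0 k - S (lift ord0 ord0) k); nra.
  rewrite -mulr_suml big_split /=.
  have := S2_bound ord0; have := S2_bound (lift ord0 ord0); rewrite -/N -/(S _ _).
  move=> a b.
  have e : forall i, \sum_k (\sum_b nm (Ah i k b)) ^+ 2 = \sum_k S i k ^+ 2 by [].
  rewrite -!e; lra.
have hfin : (q%:R ^+ n)^-1 * ((q%:R * c) ^+ m * (N%:R * (q%:R * q%:R))) = N%:R * c ^+ m :> R.
  rewrite exprMn !exprS; field; rewrite expf_neq0 // gt_eqF //.
rewrite -mulrA ler_wpM2l //.
apply: le_trans H1 _; rewrite H2 -hfin ler_wpM2l ?invr_ge0 ?exprn_ge0 ?(ltW q0R) //.
apply: le_trans H4 _; apply: ler_wpM2l; first by rewrite exprn_ge0.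
exact: H5.
Qed.


End Fourier.

Local Open Scope ring_scope.
Local Open Scope complex_scope.

Section Chars.
Variable R : realType.
Local Notation C := R[i].
Local Notation pi := (@pi R).
Variable p : nat.
Hypothesis hp : prime p.
Local Notation ee := (@ee R p).
Variable F : finFieldType.
Variable d : nat.
Variable phi : F -> 'rV['F_p]_d.
Hypothesis phiD : forall x y, phi (x + y) = phi x + phi y.
Hypothesis phib : bijective phi.

Definition dotv (v a : 'rV['F_p]_d) : 'F_p := \sum_j v ord0 j * a ord0 j.

Lemma dotvDl v w a : dotv (v + w) a = dotv v a + dotv w a.
Proof. by rewrite /dotv -big_split; apply: eq_bigr => j _; rewrite mxE mulrDl. Qed.

Lemma dotvDr v a b : dotv v (a + b) = dotv v a + dotv v b.
Proof. by rewrite /dotv -big_split; apply: eq_bigr => j _; rewrite mxE mulrDr. Qed.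

Lemma dotvC v a : dotv v a = dotv a v.
Proof. by apply: eq_bigr => j _; rewrite mulrC. Qed.

Lemma dotv0 v : dotv v 0 = 0.
Proof. by rewrite /dotv big1 // => j _; rewrite mxE mulr0. Qed.

Lemma dotvZ v c a : dotv (c *: v) a = c * dotv v a.
Proof. by rewrite /dotv mulr_sumr; apply: eq_bigr => j _; rewrite mxE mulrA. Qed.

Lemma dotv_delta v j : dotv v (delta_mx ord0 j) = v ord0 j.
Proof.
rewrite /dotv (bigD1 j) //= mxE !eqxx mulr1 big1 ?addr0 // => j' hj'.
by rewrite mxE eqxx /= (negbTE hj') mulr0.
Qed.

Lemma phi0 : phi 0 = 0.
Proof.
have h := phiD 0 0; rewrite addr0 in h.
by apply: (addrI (phi 0)); rewrite addr0 -h.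
Qed.

Lemma phiN x : phi (- x) = - phi x.
Proof. by apply/eqP; rewrite -subr_eq0 opprK -phiD addNr phi0. Qed.

Lemma phi_inj : injective phi.
Proof. exact: bij_inj. Qed.

Lemma nonzero_coord (v : 'rV['F_p]_d) : v != 0 -> exists j, v ord0 j != 0.
Proof.
move=> hv; apply/existsP; apply: contraR hv; rewrite negb_exists => /forallP h.
by apply/eqP/rowP => j; rewrite mxE; apply/eqP; move: (h j); rewrite negbK.
Qed.

Lemma ortho_row (v : 'rV['F_p]_d) :
  \sum_a ee (dotv v a) = if v == 0 then (p ^ d)%:R else 0.
Proof.
case: eqP => [->|/eqP hv].
  rewrite (eq_bigr (fun _ => 1)); last by move=> a _; rewrite /dotv big1 ?ee0 // => j _; rewrite mxE mul0r.
  by rewrite sumr_const card_mx card_Fp // mul1n.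
have [j hj] := nonzero_coord hv.
set S := \sum_a ee (dotv v a).
have h1 : S = S * ee (v ord0 j).
  rewrite {1}/S (reindex_inj (addIr (delta_mx ord0 j))) /= mulr_suml.
  by apply: eq_bigr => a _; rewrite dotvDr dotv_delta eeD.
have hne := ee_neq1 R hp hj.
apply/eqP; move: h1 => /eqP; rewrite -subr_eq0 -{1}[S]mulr1 -mulrBr mulf_eq0 -/S.
by rewrite subr_eq0 [1 == _]eq_sym (negbTE hne) orbF.
Qed.

Definition chi (a : 'rV['F_p]_d) (x : F) : C := ee (dotv (phi x) a).

Lemma chiD a x y : chi a (x + y) = chi a x * chi a y.
Proof. by rewrite /chi phiD dotvDl eeD. Qed.

Lemma chiJ a x : (chi a x)^*%C = chi a (- x).
Proof.
rewrite /chi eeN //; congr ee.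
by rewrite phiN -scaleN1r dotvZ mulN1r.
Qed.

Lemma chi0 a : chi a 0 = 1.
Proof. by rewrite /chi phi0 dotvC dotv0 ee0. Qed.

Lemma chik0 x : chi 0 x = 1.
Proof. by rewrite /chi dotv0 ee0. Qed.

Lemma cardF : #|F| = (p ^ d)%N.
Proof. by rewrite (bij_eq_card phib) card_mx card_Fp // mul1n. Qed.

Lemma orthK s : \sum_a chi a s = if s == 0 then #|F|%:R else 0.
Proof.
rewrite /chi (eq_bigr (fun a => ee (dotv (phi s) a))) // ortho_row cardF.
have -> : (phi s == 0) = (s == 0).
  by apply/eqP/eqP => [h|->]; [apply: phi_inj; rewrite h phi0 | exact: phi0].
by [].
Qed.

Lemma orthG a : a != 0 -> \sum_x chi a x = 0.
Proof.
move=> ha; rewrite /chi.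
have E : \sum_(v : 'rV['F_p]_d) ee (dotv v a) = \sum_x ee (dotv (phi x) a).
  by rewrite (reindex phi) //; case: phib => g h1 h2; exists g.
rewrite -E.
rewrite (eq_bigr (fun v => ee (dotv a v))); last by move=> v _; rewrite dotvC.
by rewrite ortho_row (negbTE ha).
Qed.

Lemma Ladd a x y : dotv (phi (x + y)) a = dotv (phi x) a + dotv (phi y) a.
Proof. by rewrite phiD dotvDl. Qed.

Lemma fiber a (ha : a != 0) u :
  #|[set x | dotv (phi x) a == u]| = #|[set x | dotv (phi x) a == 0]|.
Proof.
have [j hj] := nonzero_coord ha.
case: phib => g gK Kg.
set y := g ((u * (a ord0 j)^-1) *: delta_mx ord0 j).
have Ly : dotv (phi y) a = u.
  by rewrite /y Kg dotvZ dotvC dotv_delta mulfVK.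
rewrite -!sum1_card (reindex_inj (addIr y)) /=.
apply: eq_bigl => x; rewrite !inE Ladd Ly.
by rewrite -{2}(add0r u) (inj_eq (addIr u)).
Qed.

Lemma fiber_card a (ha : a != 0) :
  (p * #|[set x | dotv (phi x) a == 0%R]|)%N = #|F|.
Proof.
rewrite -[in RHS]sum1_card (partition_big (fun x => dotv (phi x) a) xpredT) //=.
rewrite (eq_bigr (fun _ => #|[set x | dotv (phi x) a == 0]|)).
  by rewrite sum_nat_const card_Fp.
move=> u _; rewrite -(fiber ha u) -sum1_card; apply: eq_bigl => x.
by rewrite inE.
Qed.

Lemma cb a (ha : a != 0) (mu : nat) (beta : F -> mu.-tuple bool) :
  \sum_b nm (\sum_(x | beta x == b) chi a x) <= #|F|%:R * c_mu R p mu.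
Proof.
set r := #|[set x | dotv (phi x) a == 0]|.
have hfib u : #|[set x | dotv (phi x) a == u]| = r by rewrite fiber.
have hB : #|{: mu.-tuple bool}| = (2 ^ mu)%N by rewrite card_tuple card_bool.
have H := cbound_gen R hp hfib beta [tuple of nseq mu false] hB.
apply: le_trans H _.
rewrite -(fiber_card ha) -/r /c_mu natrM natrX.
have hp0 := pR_gt0 R hp.
have hpi := pi_gt0 R.
have spp : 0 < sin (pi / p%:R).
  apply: sin_gt0_pi; rewrite divr_gt0 //= ltr_pdivrMr // -[X in X < _]mulr1 ltr_pM2l //.
  by rewrite ltr1n prime_gt1.
rewrite le_eqVlt; apply/orP; left; apply/eqP.
field; rewrite !gt_eqF //.
Qed.

Lemma c_mu_ge0 mu : 0 <= c_mu R p mu.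
Proof.
have hp0 := pR_gt0 R hp.
have hpi := pi_gt0 R.
have spp : 0 < sin (pi / p%:R).
  apply: sin_gt0_pi; rewrite divr_gt0 //= ltr_pdivrMr // -[X in X < _]mulr1 ltr_pM2l //.
  by rewrite ltr1n prime_gt1.
have h2 : 1 <= 2 ^+ mu :> R by rewrite exprn_ege1 // ler1n.
have s2 : 0 <= sin (pi / 2 ^+ mu).
  have h2' : 0 < 2 ^+ mu :> R by apply: lt_le_trans ltr01 h2.
  apply: sin_ge0_pi; apply/andP; split; first exact: divr_ge0 (ltW hpi) (ltW h2').
  by rewrite ler_pdivrMr // ler_peMr // ltW.
rewrite /c_mu; apply: divr_ge0; first by apply: mulr_ge0 => //; apply: le_trans h2.
by apply: mulr_ge0; apply: ltW.
Qed.

Lemma main_sec (mu m : nat) (tau : 'I_m.+2 -> F -> mu.-tuple bool) :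
  SD (leak_dist R tau (sum_zero_code F m.+2)) (leak_dist R tau (full_space F m.+2))
    <= 2^-1 * 2 ^+ mu * (c_mu R p mu) ^+ m.
Proof.
have := fourier_SD chiD chiJ chi0 chik0 orthK orthG
  (fun k hk beta => cb hk beta) (c_mu_ge0 mu) tau.
by rewrite card_tuple card_bool natrX.
Qed.

End Chars.

End Aux.
Import Aux.

Local Open Scope ring_scope.

Theorem corollary5p2 (R : realType) (F : finFieldType) (p w n mu : nat)
  (hp : prime p) (hw : (1 <= w)%N) (hn : (2 <= n)%N) (hmu : (1 <= mu)%N)
  (hmup : (2 ^ mu < p)%N) (hF : #|F| = (p ^ w)%N)
  (tau : 'I_n -> F -> mu.-tuple bool) :
  SD (leak_dist R tau (sum_zero_code F n)) (leak_dist R tau (full_space F n))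
    <= 2^-1 * 2 ^+ mu * (c_mu R p mu) ^+ (n - 2).
Proof.
have ch : p \in [pchar F] := card_finPcharP hF hp.
case: (pprimeChar_vectAxiom ch) => f flin fbij.
have phiD : forall x y : F, f (x + y) = f x + f y.
  by move=> x y; have := flin 1 x y; rewrite !scale1r.
case: n hn tau => [|[|m]] // _ tau.
have := @main_sec R p hp F _ f phiD fbij mu m tau.
by rewrite subSS subn1.
Qed.
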